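(* Let $\Gamma_M$ ($M>0$) be a family of nonatomic routing games with a single OD pair, sharing the same graph, path set $\mathcal P$ and edge cost functions $(c_e)_{e\in\mathcal E}$, where $M$ is the traffic demand of the OD pair. Suppose there is a function $c:(0,\infty)\to(0,\infty)$, regularly varying at $\infty$, which is a benchmark for $(c_e)_{e\in\mathcal E}$ at $\infty$, and that the network is tight relative to $c$ at $\infty$, i.e. $0<\alpha<\infty$ where $\alpha=\min_{p\in\mathcal P}\max_{e\in p}\alpha_e$ and $\alpha_e=\lim_{x\to \infty}c_e(x)/c(x)$. Then $\lim_{M\to \infty}\mathrm{PoA}(\Gamma_M)=1$.
   Context: A nonatomic routing game consists of: a finite directed multigraph with edge set $\mathcal E$; a finite set $\mathcal I$ of origin–destination (OD) pairs, each $i\in\mathcal I$ with a demand $m^i\ge 0$ and a nonempty finite set $\mathcal P^i$ of paths from its origin to its destination, the sets $\mathcal P^i$ pairwise disjoint, $\mathcal P=\bigcup_i\mathcal P^i$; and for each edge $e$ a continuous nondecreasing cost function $c_e:[0,\infty)\to[0,\infty)$. The total inflow is $M=\sum_i m^i>0$. A feasible flow is $f\in\mathbb R_+^{\mathcal P}$ with $\sum_{p\in\mathcal P^i}f_p=m^i$ for all $i$; it induces loads $x_e=\sum_{p\ni e}f_p$ and path costs $c_p(f)=\sum_{e\in p}c_e(x_e)$. A Wardrop equilibrium is a feasible flow $f^*$ with $c_p(f^* )\le c_{p'}(f^* )$ for all $i$ and all $p,p'\in\mathcal P^i$ with $f^*_p>0$. The social cost is $L(x)=\sum_e x_e c_e(x_e)$;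 $\mathrm{Opt}(\Gamma)$ is its minimum over loads induced by feasible flows, $\mathrm{Eq}(\Gamma)=L(x^* )$ for the load of a Wardrop equilibrium (all equilibria have the same social cost), and $\mathrm{PoA}(\Gamma)=\mathrm{Eq}(\Gamma)/\mathrm{Opt}(\Gamma)$; it is assumed throughout that $\mathrm{Opt}(\Gamma)>0$ (if $\mathrm{Opt}=0$ one sets $\mathrm{PoA}=1$). For $\omega\in\{0,\infty\}$, $g:(0,\infty)\to(0,\infty)$ is regularly varying at $\omega$ if $\lim_{t\to\omega}g(tx)/g(t)$ exists and is finite and nonzero for every $x>0$. A function $c$ regularly varying at $\omega$ is a benchmark for the costs $(c_e)$ at $\omega$ if the limit $\alpha_e=\lim_{x\to\omega}c_e(x)/c(x)\in[0,\infty]$ exists for every edge $e$. *)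

(* Defs.v *)
From HB Require Import structures.
From mathcomp Require Import all_boot all_order all_algebra.
From mathcomp Require Import all_classical all_reals all_analysis.
Set Implicit Arguments. Unset Strict Implicit. Unset Printing Implicit Defensive.
Import Order.TTheory GRing.Theory Num.Theory.
Import numFieldNormedType.Exports.
Local Open Scope classical_set_scope.
Local Open Scope ring_scope.

(* A sequence of edges s of a directed multigraph (edges E, endpoints src/tgt
   in the vertex type V) is a (simple) path from o to d: the i-th edge starts
   where the (i-1)-th ends (the first at o), the last one ends at d, and no
   vertex is visited twice. *)
Definition is_od_path (V E : finType) (src tgt : E -> V) (o d : V) (s : seq E) :=
  [/\ map src s = belast o (map tgt s), last o (map tgt s) = d
    & uniq (o :: map tgt s)].

Section Routing.
Variables (R : realType) (E P : finType) (pth : P -> seq E) (ce : E -> R -> R).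

Definition load (f : P -> R) (e : E) : R := \sum_(p : P | e \in pth p) f p.

Definition path_cost (f : P -> R) (p : P) : R := \sum_(e <- pth p) ce e (load f e).

Definition feasible (M : R) : set (P -> R) :=
  [set f | (forall p, 0 <= f p) /\ \sum_(p : P) f p = M].

Definition wardrop (M : R) (f : P -> R) : Prop :=
  feasible M f /\ (forall p p', 0 < f p -> path_cost f p <= path_cost f p').

Definition social_cost (f : P -> R) : R :=
  \sum_(e : E) load f e * ce e (load f e).

Definition opt (M : R) : R := inf [set social_cost f | f in feasible M].

(* PoA(Gamma_M) computed from an equilibrium f (convention PoA = 1 if Opt = 0) *)
Definition poa (M : R) (f : P -> R) : R :=
  if opt M == 0 then 1 else social_cost f / opt M.

Definition alpha_net (alpha : E -> \bar R) : \bar R :=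
  (\big[mine/+oo]_(p : P) \big[maxe/-oo]_(e <- pth p) alpha e)%E.

Definition tight (alpha : E -> \bar R) : Prop :=
  (0 < alpha_net alpha < +oo)%E.
End Routing.

Definition regularly_varying_at_infty (R : realType) (g : R -> R) : Prop :=
  (forall t, 0 < t -> 0 < g t) /\
  (forall x : R, 0 < x -> exists2 l : R, l != 0 & g (t * x) / g t @[t --> +oo] --> l).

(* Main.v *)
Require Import Defs.
From HB Require Import structures.
From mathcomp Require Import all_boot all_order all_algebra.
From mathcomp Require Import all_classical all_reals all_analysis.
From mathcomp Require Import ring lra.
Import Order.TTheory GRing.Theory Num.Theory.
Import numFieldNormedType.Exports.
Local Open Scope classical_set_scope.
Local Open Scope ring_scope.

Set Implicit Arguments. Unset Strict Implicit. Unset Printing Implicit Defensive.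
Section H2.
Variable R : realType.

Lemma add_mono_lin (L : R -> R) : (forall u v, L (u + v) = L u + L v) ->
  (forall u v, u <= v -> L u <= L v) -> forall u, L u = u * L 1.
Proof.
move=> Ladd Lmon.
have L0 : L 0 = 0.
  by have := Ladd 0 0; rewrite addr0; lra.
have LN u : L (- u) = - L u.
  by have := Ladd u (- u); rewrite subrr L0; lra.
have Ln (n : nat) u : L (n%:R * u) = n%:R * L u.
  elim: n => [|n IH]; first by rewrite !mul0r L0.
  by rewrite -addn1 natrD mulrDl Ladd IH mul1r mulrDl mul1r.
have Lnat (m : nat) : L m%:R = m%:R * L 1 by rewrite -[in LHS](mulr1 m%:R) Ln.
have L1ge0 : 0 <= L 1 by rewrite -L0; apply: Lmon.
have pos u : 0 <= u -> L u = u * L 1.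
  move=> u0.
  have key (n : nat) : n.+1%:R * `|L u - u * L 1| <= L 1.
    set m := Num.trunc (n.+1%:R * u).
    have m0 : 0 <= n.+1%:R * u by rewrite mulr_ge0.
    have h1 : m%:R <= n.+1%:R * u by rewrite truncn_le.
    have h2 : n.+1%:R * u < m.+1%:R by apply: truncnS_gt.
    have a1 : m%:R * L 1 <= n.+1%:R * L u.
      by rewrite -Lnat -Ln; apply: Lmon.
    have a2 : n.+1%:R * L u <= m.+1%:R * L 1.
      by rewrite -Lnat -Ln; apply: Lmon; apply: ltW.
    have b1 : m%:R * L 1 <= n.+1%:R * u * L 1 by rewrite ler_wpM2r.
    have b2 : n.+1%:R * u * L 1 <= m.+1%:R * L 1 by rewrite ler_wpM2r // ltW.
    rewrite -normr_nat -normrM ler_norml; apply/andP; split.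
      rewrite mulrBr mulrA; rewrite -natr1 in a2 b2; nra.
    rewrite mulrBr mulrA; rewrite -natr1 in a2 b2; nra.
  apply/eqP; rewrite -subr_eq0 -normr_eq0; apply/eqP.
  apply/eqP; rewrite eq_le normr_ge0 andbT; apply/negP => /negP; rewrite -ltNge => dpos.
  set d := `|L u - u * L 1| in dpos key.
  have := @archi_boundP _ (L 1 / d); rewrite divr_ge0 // ?ltW // => /(_ isT).
  set n := Num.Def.archi_bound _ => hn.
  have := key n; rewrite ltr_pdivrMr // in hn.
  have : n%:R * d <= n.+1%:R * d by apply: ler_wpM2r; [exact: ltW | rewrite ler_nat].
  lra.
move=> u; case: (lerP 0 u) => [|u0]; first exact: pos.
by rewrite -[u]opprK LN pos ?mulNr // oppr_ge0 ltW.
Qed.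
End H2.

Section H2b.
Variable R : realType.

Lemma tangent_exp (r u : R) : 0 <= r -> 1 + (r+1) * (expR u - 1) <= expR ((r+1) * u).
Proof.
move=> r0.
have E0 := expR_gt0 u.
have hF := expR_ge1Dx (r * u).
have hG := expR_ge1Dx (- u).
have hEG : expR u * expR (- u) = 1 by rewrite -expRD subrr expR0.
have -> : expR ((r+1) * u) = expR u * expR (r * u) by rewrite -expRD; congr expR; ring.
have h1 : expR u * (1 + r * u) <= expR u * expR (r * u) by rewrite ler_pM2l.
have h2 : 0 <= expR u * (expR (-u) - 1 + u) by apply: mulr_ge0; [exact: ltW | lra].
have h3 : 0 <= r * (expR u * (expR (-u) - 1 + u)) by rewrite mulr_ge0.
have e : expR u * (1 + r * u) - (1 + (r+1) * (expR u - 1)) = r * (expR u * (expR (-u) - 1 + u)).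
  by rewrite !mulrDr hEG; ring.
lra.
Qed.

Definition phi (r s : R) := expR (r * ln s).

Lemma phi_gt0 r s : 0 < phi r s. Proof. exact: expR_gt0. Qed.

Lemma tangent_phi (r s t : R) : 0 <= r -> 0 <= s -> 0 < t ->
  0 <= s * phi r s - t * phi r t - (r+1) * phi r t * (s - t).
Proof.
move=> r0 s0 t0.
have pt := phi_gt0 r t.
have [->|sp] := eqVneq s 0.
  have : 0 <= r * (t * phi r t) by rewrite mulr_ge0 // mulr_ge0 // ltW.
  set A := phi r t; move=> h. have -> : 0 * phi r 0 - t * A - (r + 1) * A * (0 - t) = r * (t * A) by ring.
  done.
have s0' : 0 < s by rewrite lt_neqAle eq_sym sp.
have ex (x : R) : 0 < x -> x * phi r x = expR ((r+1) * ln x).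
  move=> x0; rewrite /phi mulrDl mul1r expRD lnK ?posrE // mulrC.
  done.
rewrite (ex s) // (ex t) //.
have -> : (r + 1) * ln s = (r+1) * ln t + (r+1) * (ln s - ln t) by ring.
rewrite expRD.
have hu := @tangent_exp r (ln s - ln t) r0.
have eu : expR (ln s - ln t) = s / t by rewrite expRB !lnK ?posrE.
rewrite eu in hu.
have A0 : 0 < expR ((r + 1) * ln t) by exact: expR_gt0.
have h := ler_wpM2l (ltW A0) hu.
have eA : expR ((r + 1) * ln t) = t * phi r t by rewrite ex.
rewrite eA in h A0 *.
have -> : (r + 1) * phi r t * (s - t) = t * phi r t * ((r+1) * (s / t - 1)).
  by field; rewrite gt_eqF.
rewrite mulrDr mulr1 in h.
lra.
Qed.
End H2b.


Section K1.
Variable R : realType.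

Lemma absM_le1 (t x E : R) : 0 <= t <= 1 -> `|x| <= E -> `|t * x| <= E.
Proof.
case/andP=> t0 t1 hx; rewrite normrM ger0_norm //.
have := normr_ge0 x; nra.
Qed.

Lemma comb_generic (k s t Gs Gt ps pt E1 B : R) : 0 <= k ->
  0 <= s <= 1 -> 0 <= t <= 1 ->
  0 <= s * ps - t * pt - k * pt * (s - t) ->
  `|Gt - pt| <= E1 -> - B <= s * (Gs - ps) ->
  - ((2 + k) * E1 + B) <= s * Gs - t * Gt - k * Gt * (s - t).
Proof.
move=> k0 hs ht T A1 A2.
have st : 0 <= `|s - t| <= 1.
  rewrite normr_ge0 /=; case/andP: hs => ? ?; case/andP: ht => ? ?.
  by rewrite ler_norml; apply/andP; split; lra.
have h1 := absM_le1 ht A1.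
have h3 : `|(Gt - pt) * (s - t)| <= E1.
  by rewrite normrM; case/andP: st => st0 st1; have := normr_ge0 (Gt - pt); nra.
have h4 : k * ((Gt - pt) * (s - t)) <= k * E1.
  by apply: ler_wpM2l => //; move: h3; rewrite ler_norml => /andP[].
move: h1; rewrite !ler_norml => /andP[h1 h1'].
have e : s * Gs - t * Gt - k * Gt * (s - t) =
   (s * ps - t * pt - k * pt * (s - t)) + s * (Gs - ps) - t * (Gt - pt)
   - k * ((Gt - pt) * (s - t)) by ring.
rewrite e.
have : (2 + k) * E1 = E1 + E1 + k * E1 by ring.
lra.
Qed.

Lemma expN_bound (a e0 x : R) : 0 < e0 -> 0 <= x -> a <= e0 * x -> a * expR (- x) <= e0.
Proof.
move=> e0p x0 hx; rewrite expRN.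
have h := expR_ge1Dx x; have ex0 := expR_gt0 x.
rewrite ler_pdivrMr //; nra.
Qed.

Lemma K_params (r a e0 : R) : 0 <= r -> 0 <= a -> 0 < e0 ->
  exists (th : R) (N : nat), [/\ 0 < th, a * r * th <= e0,
    a * expR (- (th * N.+1%:R)) <= e0 &
    0 < r -> a * expR (- (r * th * N.+1%:R)) <= e0].
Proof.
move=> r0 a0 e0p.
set th := e0 / (a * r + 1).
have ar1 : 0 < a * r + 1 by have := mulr_ge0 a0 r0; lra.
have thp : 0 < th by rewrite divr_gt0.
have arth : a * r * th <= e0.
  have : th * (a * r + 1) = e0 by rewrite /th divfK // gt_eqF.
  have := mulr_ge0 (mulr_ge0 a0 r0) (ltW thp). nra.
set X := a / e0 / th.
have X0 : 0 <= X by rewrite /X !divr_ge0 // ltW.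
have [N HN] : exists N : nat, X * (1 + r^-1) < N%:R.
  exists (Num.Def.archi_bound (X * (1 + r^-1))); apply: archi_boundP.
  by apply: mulr_ge0 => //; rewrite addr_ge0 // invr_ge0.
exists th, N.
have aE : a = X * th * e0 by rewrite /X; field; rewrite !gt_eqF.
have ri0 : 0 <= r^-1 by rewrite invr_ge0.
have Xr : X <= X * (1 + r^-1) by have := mulr_ge0 X0 ri0; rewrite mulrDr mulr1; lra.
have Nn : N%:R <= N.+1%:R :> R by rewrite ler_nat.
have the0 : 0 < th * e0 by rewrite mulr_gt0.
split => //.
  apply: expN_bound => //; first by apply: mulr_ge0; [exact: ltW | exact: ler0n].
  have h : X <= N.+1%:R by lra.
  rewrite aE; have := ler_wpM2r (ltW the0) h.
  have -> : e0 * (th * N.+1%:R) = N.+1%:R * (th * e0) by ring.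
  by rewrite -[X * th * e0]mulrA.
move=> rp; apply: expN_bound => //.
  by apply: mulr_ge0; [apply: mulr_ge0 => //; exact: ltW | exact: ler0n].
have h1 : X * (1 + r^-1) * r = X * (r + 1) by field; rewrite gt_eqF.
have h2 : X * (1 + r^-1) * r < N%:R * r by rewrite ltr_pM2r.
have h3 : X <= X * (r + 1) by have := mulr_ge0 X0 r0; rewrite mulrDr mulr1; lra.
have h4 : N%:R * r <= N.+1%:R * r by rewrite ler_wpM2r.
have h5 : X <= r * N.+1%:R by rewrite mulrC; lra.
rewrite aE; have := ler_wpM2r (ltW the0) h5.
have -> : e0 * (r * th * N.+1%:R) = r * N.+1%:R * (th * e0) by ring.
by rewrite -[X * th * e0]mulrA.
Qed.
End K1.


Section K.
Variable R : realType.

Definition ugrid (th : R) (i : nat) := expR (- (th * i%:R)).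

Lemma ugrid_gt0 (th : R) i : 0 < ugrid th i. Proof. exact: expR_gt0. Qed.
Lemma ugrid_le1 (th : R) i : 0 < th -> ugrid th i <= 1.
Proof. by move=> thp; rewrite /ugrid expR_le1 oppr_le0 mulr_ge0 // ltW. Qed.
Lemma ugrid0 (th : R) : ugrid th 0 = 1.
Proof. by rewrite /ugrid mulr0 oppr0 expR0. Qed.
Lemma phi_ugrid (r th : R) i : phi r (ugrid th i) = expR (- (r * th * i%:R)).
Proof. by rewrite /phi /ugrid expRK; congr expR; ring. Qed.
Lemma phi_le1 (r x : R) : 0 <= r -> x <= 1 -> phi r x <= 1.
Proof. by move=> r0 x1; rewrite /phi expR_le1 mulr_ge0_le0 // ln_le0. Qed.
Lemma phi_ge0 (r x : R) : 0 <= phi r x. Proof. exact: expR_ge0. Qed.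
Lemma phi_mon (r x y : R) : 0 <= r -> 0 < x -> x <= y -> phi r x <= phi r y.
Proof.
move=> r0 x0 xy; rewrite /phi ler_expR ler_wpM2l //.
by rewrite ler_ln // posrE (lt_le_trans x0 xy).
Qed.
Lemma phi1 (r : R) : phi r 1 = 1. Proof. by rewrite /phi ln1 mulr0 expR0. Qed.

Lemma grid (th : R) n (x : R) : 0 < th -> ugrid th n.+1 <= x -> x <= 1 ->
  exists i, (i <= n)%N /\ ugrid th i.+1 <= x <= ugrid th i.
Proof.
move=> thp; elim: n => [|n IH] hx1 hx2; first by exists 0%N; rewrite ugrid0 hx1 hx2.
case: (lerP (ugrid th n.+1) x) => h.
  by have [i [hi hh]] := IH h hx2; exists i; split => //; apply: leqW.
by exists n.+1; rewrite hx1 ltW.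
Qed.

Lemma aux_f3 (c A B : R) : 1 + - c <= B -> A <= 1 -> 0 < A -> 0 <= c -> A - A * B <= c.
Proof. move=> h1 h2 h3 h4; nra. Qed.

Lemma aux_fin (Gx Gi Gj pi pj px e0 d : R) :
  (- e0 <= Gi - pi <= e0) -> (- e0 <= Gj - pj <= e0) -> Gx <= Gi -> Gj <= Gx ->
  pj <= px -> px <= pi -> pi - pj <= d -> `|Gx - px| <= e0 + d.
Proof.
move=> /andP[p1 p1'] /andP[p2 p2'] g1 g2 f5 f6 f4.
rewrite ler_norml; apply/andP; split; lra.
Qed.

Lemma approx_lemma (r a e0 th : R) (N : nat) (G : R -> R) : 0 <= r -> 0 <= a -> 0 < th ->
  (forall s t, 0 <= s -> s <= t -> t <= 1 -> G s <= G t) ->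
  (forall i, (i <= N.+1)%N -> `|G (ugrid th i) - a * phi r (ugrid th i)| <= e0) ->
  forall x, ugrid th N.+1 <= x -> x <= 1 -> `|G x - a * phi r x| <= e0 + a * r * th.
Proof.
move=> r0 a0 thp Gmon inpts x hx1 hx2.
have [i [hi /andP[l1 l2]]] := grid thp hx1 hx2.
have x0 : 0 < x by apply: lt_le_trans l1; exact: ugrid_gt0.
have g1 : G x <= G (ugrid th i) := Gmon _ _ (ltW x0) l2 (ugrid_le1 i thp).
have g2 : G (ugrid th i.+1) <= G x := Gmon _ _ (ltW (ugrid_gt0 _ _)) l1 hx2.
have p1 := inpts i (leqW hi).
have p2 := inpts i.+1 hi.
rewrite ler_norml in p1; rewrite ler_norml in p2.
have f1 : phi r (ugrid th i.+1) <= phi r x := phi_mon r0 (ugrid_gt0 _ _) l1.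
have f2 : phi r x <= phi r (ugrid th i) := phi_mon r0 x0 l2.
have f3 : phi r (ugrid th i) - phi r (ugrid th i.+1) <= r * th.
  rewrite !phi_ugrid.
  have -> : - (r * th * i.+1%:R) = - (r * th * i%:R) + - (r * th) by rewrite -natr1; ring.
  rewrite expRD.
  have h1 := expR_ge1Dx (- (r * th)).
  have h2 : expR (- (r * th * i%:R)) <= 1 by rewrite -(phi_ugrid r th i) phi_le1 // ugrid_le1.
  have h3 : 0 < expR (- (r * th * i%:R)) := expR_gt0 _.
  have h4 : 0 <= r * th by rewrite mulr_ge0 // ltW.
  exact: aux_f3.
have f4 : a * (phi r (ugrid th i) - phi r (ugrid th i.+1)) <= a * (r * th) by rewrite ler_wpM2l.
have f5 : a * phi r (ugrid th i.+1) <= a * phi r x by rewrite ler_wpM2l.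
have f6 : a * phi r x <= a * phi r (ugrid th i) by rewrite ler_wpM2l.
move: f4; rewrite mulrBr mulrA => f4.
exact: (aux_fin p1 p2 g1 g2 f5 f6 f4).
Qed.

Lemma comb_s (s ps Gs E1 a eta : R) : 0 <= E1 -> 0 <= s -> 0 <= a -> 0 <= Gs -> 0 <= eta ->
  0 <= ps <= a -> (eta <= s -> `|Gs - ps| <= E1) -> s <= 1 ->
  - (E1 + a * eta) <= s * (Gs - ps).
Proof.
move=> E0 s0 a0 G0 eta0 /andP[p0 pa] hE s1.
have aeta : 0 <= a * eta by rewrite mulr_ge0.
case: (lerP eta s) => h.
  have := hE h; rewrite ler_norml => /andP[h1 h2].
  nra.
have h1 : s * ps <= s * a by rewrite ler_wpM2l.
have h2 : s * a <= eta * a by rewrite ler_wpM2r // ltW.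
have h3 : 0 <= s * Gs by rewrite mulr_ge0.
rewrite mulrBr; rewrite [eta * a]mulrC in h2; lra.
Qed.

Lemma comb_small_pos (r s t Gs Gt B : R) : 0 <= r -> 0 <= s <= 1 -> 0 <= t <= 1 ->
  0 <= Gs -> 0 <= Gt -> Gt <= B ->
  - ((r + 2) * B) <= s * Gs - t * Gt - (r + 1) * Gt * (s - t).
Proof.
move=> r0 /andP[s0 s1] /andP[t0 t1] Gs0 Gt0 GB.
have e : s * Gs - t * Gt - (r + 1) * Gt * (s - t) = s * Gs + r * t * Gt - (r + 1) * s * Gt by ring.
rewrite e.
have h1 : 0 <= s * Gs by rewrite mulr_ge0.
have h2 : 0 <= r * t * Gt by rewrite !mulr_ge0.
have h3 : (r + 1) * s * Gt <= (r + 1) * B.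
  have : s * Gt <= B by nra.
  have r1 : 0 <= r + 1 by lra.
  by move=> h; rewrite -mulrA ler_wpM2l.
have : (r + 2) * B = (r + 1) * B + B by ring.
have B0 : 0 <= B by lra.
lra.
Qed.

Lemma comb_small_zero (s t Gs Gt B eta : R) : 0 <= s <= 1 -> 0 <= t -> t <= eta ->
  (t <= s -> Gt <= Gs) -> 0 <= Gs -> 0 <= Gt -> Gt <= B ->
  - (eta * B) <= s * Gs - t * Gt - (0 + 1) * Gt * (s - t).
Proof.
move=> /andP[s0 s1] t0 te mon Gs0 Gt0 GB.
have e : s * Gs - t * Gt - (0 + 1) * Gt * (s - t) = s * (Gs - Gt) by ring.
rewrite e.
have B0 : 0 <= B by lra.
have eB : 0 <= eta * B by rewrite mulr_ge0 //; lra.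
case: (lerP t s) => h.
  have := mon h => h'; have : 0 <= s * (Gs - Gt) by rewrite mulr_ge0 // subr_ge0.
  lra.
have : s * Gt <= eta * B by apply: ler_pM => //; lra.
nra.
Qed.

Lemma aux_up (x p e : R) : `|x - p| <= e -> x <= p + e.
Proof. by rewrite ler_norml => /andP[_ h]; lra. Qed.

Lemma aux_negle (eps X H : R) : X <= eps -> - X <= H -> - eps <= H.
Proof. move=> h1 h2; lra. Qed.

Lemma num_generic (r e0 d b : R) : 0 <= r -> 0 <= e0 -> 0 <= d <= e0 -> b <= e0 ->
  (2 + (r+1)) * (e0 + d) + (e0 + d + b) <= 4 * (r + 3) * e0.
Proof. move=> r0 e0p /andP[d0 de] be; nra. Qed.

Lemma num_zero (eta a e0 : R) : 0 < e0 -> 0 <= eta <= 1 -> a * eta <= e0 ->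
  eta * (a + e0) <= 4 * (0 + 3) * e0.
Proof. move=> e0p /andP[h1 h2] h3; nra. Qed.

Lemma num_pos (r e0 : R) : 0 <= r -> 0 <= e0 -> (r + 2) * (e0 + e0) <= 4 * (r + 3) * e0.
Proof. move=> r0 e0p; nra. Qed.

Lemma aux_tan (a r s t : R) : 0 <= a ->
  0 <= s * phi r s - t * phi r t - (r + 1) * phi r t * (s - t) ->
  0 <= s * (a * phi r s) - t * (a * phi r t) - (r + 1) * (a * phi r t) * (s - t).
Proof.
move=> a0 T; have := mulr_ge0 a0 T.
have -> : a * (s * phi r s - t * phi r t - (r + 1) * phi r t * (s - t)) =
  s * (a * phi r s) - t * (a * phi r t) - (r + 1) * (a * phi r t) * (s - t) by ring.
done.
Qed.

Lemma lemmaK (r a eps : R) : 0 <= r -> 0 <= a -> 0 < eps ->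
  exists (pts : seq R) (e' : R), 0 < e' /\ (forall s, s \in pts -> 0 < s <= 1) /\
  forall G : R -> R, (forall s t, 0 <= s -> s <= t -> t <= 1 -> G s <= G t) ->
   (forall s, 0 <= s -> s <= 1 -> 0 <= G s) ->
   (forall s, s \in pts -> `|G s - a * phi r s| <= e') ->
   forall s t, 0 <= s <= 1 -> 0 <= t <= 1 ->
     - eps <= s * G s - t * G t - (r+1) * G t * (s - t).
Proof.
move=> r0 a0 eps0.
set e0 := eps / (4 * (r + 3)).
have r3 : 0 < 4 * (r + 3) by rewrite mulr_gt0 //; lra.
have e0p : 0 < e0 by rewrite divr_gt0.
have epsE : eps = 4 * (r + 3) * e0 by rewrite /e0 mulrC divfK // gt_eqF.
have [th [N [thp arth eta_small phieta_small]]] := K_params r0 a0 e0p.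
exists [seq ugrid th i | i <- iota 0 N.+2], e0.
split => //; split.
  by move=> s /mapP [i _ ->]; rewrite ugrid_gt0 ugrid_le1.
move=> G Gmon Gpos Gpts s t hs ht.
have inpts i : (i <= N.+1)%N -> `|G (ugrid th i) - a * phi r (ugrid th i)| <= e0.
  by move=> hi; apply: Gpts; apply/mapP; exists i => //; rewrite mem_iota add0n ltnS hi.
set eta := ugrid th N.+1.
have eta_gt0 : 0 < eta := ugrid_gt0 _ _.
have eta_le1 : eta <= 1 := ugrid_le1 _ thp.
have approx := approx_lemma r0 a0 thp Gmon inpts.
have Geta : G eta <= a * phi r eta + e0 by apply: aux_up; exact: inpts.
move: (hs) (ht) => /andP[s0 s1] /andP[t0 t1].
have Gt0 := Gpos t t0 t1; have Gs0 := Gpos s s0 s1.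
have e0eps : 0 <= e0 by exact: ltW.
case: (lerP eta t) => hte.
  have tp : 0 < t by apply: lt_le_trans hte.
  have T' := aux_tan a0 (tangent_phi r0 s0 tp).
  have A1 := approx t hte t1.
  have ps : 0 <= a * phi r s <= a.
    by rewrite mulr_ge0 ?phi_ge0 //= -{2}[a]mulr1 ler_wpM2l // phi_le1.
  have E1p : 0 <= e0 + a * r * th by rewrite addr_ge0 // !mulr_ge0 // ltW.
  have A2 := comb_s E1p s0 a0 Gs0 (ltW eta_gt0) ps (fun h => approx s h s1) s1.
  have k0 : 0 <= r + 1 by lra.
  apply: aux_negle (comb_generic k0 hs ht T' A1 A2).
  rewrite epsE; apply: num_generic => //.
  by rewrite arth !mulr_ge0 // ltW.
have Gteta : G t <= a * phi r eta + e0 by apply: le_trans Geta; apply: Gmon => //; exact: ltW.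
have [rz|rp] := eqVneq r 0.
  have B : G t <= a + e0 by move: Gteta; rewrite rz /phi mul0r expR0 mulr1.
  have mon : t <= s -> G t <= G s by move=> h; apply: Gmon.
  have := comb_small_zero hs t0 (ltW hte) mon Gs0 Gt0 B.
  rewrite rz; apply: aux_negle; rewrite epsE rz; apply: num_zero => //.
  by rewrite eta_le1 ltW.
have rpos : 0 < r by rewrite lt_neqAle eq_sym rp.
have Bt : G t <= e0 + e0.
  apply: (le_trans Gteta); rewrite lerD2r; have := phieta_small rpos.
  by rewrite -phi_ugrid.
apply: aux_negle (comb_small_pos r0 hs ht Gs0 Gt0 Bt).
by rewrite epsE; apply: num_pos.
Qed.
End K.


Section EV.
Variable R : realType.

Definition ev (P : R -> Prop) := exists M0 : R, forall M, M0 < M -> P M.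
Definition limto (f : R -> R) (l : R) := forall eps, 0 < eps -> ev (fun x => `|f x - l| < eps).

Lemma evI (P Q : R -> Prop) : ev P -> ev Q -> ev (fun x => P x /\ Q x).
Proof.
move=> [a Ha] [b Hb]; exists (Num.max a b) => M; rewrite gt_max => /andP[h1 h2].
by split; [apply: Ha | apply: Hb].
Qed.

Lemma evS (P Q : R -> Prop) : (forall x, P x -> Q x) -> ev P -> ev Q.
Proof. by move=> PQ [a Ha]; exists a => M /Ha /PQ. Qed.

Lemma ev_gt (a : R) : ev (fun x => a < x).
Proof. by exists a. Qed.

Lemma ev_ex (P : R -> Prop) : ev P -> exists x, P x.
Proof. by move=> [a Ha]; exists (a + 1); apply: Ha; lra. Qed.

Lemma ev_seq (T : eqType) (s : seq T) (P : T -> R -> Prop) :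
  (forall t, t \in s -> ev (P t)) -> ev (fun x => forall t, t \in s -> P t x).
Proof.
elim: s => [|a s IH] H; first by exists 0.
have h1 := H a (mem_head _ _).
have h2 : ev (fun x => forall t, t \in s -> P t x).
  by apply: IH => t ts; apply: H; rewrite in_cons ts orbT.
apply: evS (evI h1 h2) => x [Pa Ps] t; rewrite in_cons => /orP[/eqP ->|]//.
exact: Ps.
Qed.

Lemma ev_fin (T : finType) (P : T -> R -> Prop) :
  (forall t, ev (P t)) -> ev (fun x => forall t, P t x).
Proof.
move=> H; have := @ev_seq T (enum T) P (fun t _ => H t).
by apply: evS => x Hx t; apply: Hx; rewrite mem_enum.
Qed.

Lemma ev_scale (s : R) (P : R -> Prop) : 0 < s -> ev P -> ev (fun M => P (M * s)).
Proof.
move=> s0 [a Ha]; exists (a / s) => M aM; apply: Ha.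
by rewrite -ltr_pdivrMr.
Qed.

Lemma near_ev (P : R -> Prop) : (\forall x \near +oo, P x) -> ev P.
Proof. by move=> [M [_ H]]; exists M. Qed.

Lemma ev_near (P : R -> Prop) : ev P -> \forall x \near +oo, P x.
Proof. by move=> [M H]; exists M; split => //; exact: num_real. Qed.

Lemma limto_cvg (f : R -> R) l : f x @[x --> +oo] --> l -> limto f l.
Proof. by move/cvgrPdistC_lt => H eps /H /near_ev. Qed.

Lemma cvg_limto (f : R -> R) l : limto f l -> f x @[x --> +oo] --> l.
Proof. by move=> H; apply/cvgrPdistC_lt => eps /H /ev_near. Qed.

Lemma limto_ereal (f : R -> R) (r : R) : (f x)%:E @[x --> +oo] --> r%:E -> limto f r.
Proof. by move/fine_cvgP => [_ h]; apply: limto_cvg. Qed.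

Lemma ev_ey (f : R -> R) : (f x)%:E @[x --> +oo] --> +oo%E -> forall A, ev (fun x => A < f x).
Proof.
move/cvgeyPgtr => H A; have := H A (num_real A); move/near_ev.
by apply: evS => x; rewrite lte_fin.
Qed.

Lemma ev_eNy (f : R -> R) : (f x)%:E @[x --> +oo] --> -oo%E -> forall A, ev (fun x => f x < A).
Proof.
move/cvgeNyPltr => H A; have := H A (num_real A); move/near_ev.
by apply: evS => x; rewrite lte_fin.
Qed.

Lemma limto_lt (f : R -> R) l b : limto f l -> b < l -> ev (fun x => b < f x).
Proof.
move=> H bl; have := H (l - b); rewrite subr_gt0 => /(_ bl).
by apply: evS => x; rewrite ltr_norml => /andP[h _]; lra.
Qed.

Lemma limto_gt (f : R -> R) l b : limto f l -> l < b -> ev (fun x => f x < b).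
Proof.
move=> H bl; have := H (b - l); rewrite subr_gt0 => /(_ bl).
by apply: evS => x; rewrite ltr_norml => /andP[_ h]; lra.
Qed.

Lemma limto_le (f g : R -> R) a b : limto f a -> limto g b ->
  ev (fun x => f x <= g x) -> a <= b.
Proof.
move=> Hf Hg Hfg; rewrite leNgt; apply/negP => ba.
have h1 := limto_lt Hf (midf_lt ba).2.
have h2 := limto_gt Hg (midf_lt ba).1.
have [x [[x1 x2] x3]] := ev_ex (evI (evI h1 h2) Hfg).
have := lt_trans x2 x1; rewrite ltNge x3 //.
Qed.

Lemma limto_const (b : R) : limto (fun _ => b) b.
Proof. by move=> eps e0; exists 0 => M _; rewrite subrr normr0. Qed.

Lemma limto_unique (f : R -> R) a b : limto f a -> limto f b -> a = b.
Proof.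
move=> Ha Hb; apply/eqP; rewrite eq_le.
by rewrite (limto_le Ha Hb) ?(limto_le Hb Ha) //; exists 0.
Qed.

Lemma limto_scale (f : R -> R) l s : 0 < s -> limto f l -> limto (fun M => f (M * s)) l.
Proof. by move=> s0 H eps /H; apply: ev_scale. Qed.

Lemma limto_mul (f g : R -> R) a b : limto f a -> limto g b ->
  limto (fun x => f x * g x) (a * b).
Proof.
move=> /cvg_limto Hf /cvg_limto Hg; apply: limto_cvg.
exact: cvgM.
Qed.

Lemma limto_eq (f g : R -> R) l : ev (fun x => f x = g x) -> limto f l -> limto g l.
Proof.
move=> Hfg Hf eps /Hf h; apply: evS (evI h Hfg) => x [h1 h2].
by rewrite -h2.
Qed.

End EV.


Section Net.
Variables (R : realType) (E P : finType) (pth : P -> seq E) (ce : E -> R -> R).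
Hypothesis Huniq : forall p, uniq (pth p).

Lemma load_ge0 (f : P -> R) e : (forall p, 0 <= f p) -> 0 <= load pth f e.
Proof. by move=> f0; rewrite /load sumr_ge0. Qed.

Lemma load_le (f : P -> R) e : (forall p, 0 <= f p) -> load pth f e <= \sum_p f p.
Proof.
move=> f0; rewrite /load [leRHS](bigID (fun p => e \in pth p)) /= lerDl.
by rewrite sumr_ge0.
Qed.

Lemma sum_load (f : P -> R) (w : E -> R) :
  \sum_e load pth f e * w e = \sum_p f p * \sum_(e <- pth p) w e.
Proof.
rewrite /load.
under eq_bigr do rewrite mulr_suml.
rewrite (exchange_big_dep predT) //=.
apply: eq_bigr => p _; rewrite big_uniq // mulr_sumr.
by apply: eq_bigl => e.
Qed.

Lemma social_costE (f : P -> R) :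
  social_cost pth ce f = \sum_p f p * path_cost pth ce f p.
Proof. by rewrite /social_cost sum_load. Qed.

Hypothesis Hnneg : forall e (x : R), 0 <= x -> 0 <= ce e x.

Lemma path_cost_ge (f : P -> R) p e : (forall p, 0 <= f p) -> e \in pth p ->
  ce e (load pth f e) <= path_cost pth ce f p.
Proof.
move=> f0 ep; rewrite /path_cost big_uniq // (bigD1 e) //= lerDl.
by rewrite sumr_ge0 // => i _; apply: Hnneg; apply: load_ge0.
Qed.

Lemma path_cost_ge0 (f : P -> R) p : (forall p, 0 <= f p) -> 0 <= path_cost pth ce f p.
Proof. by move=> f0; rewrite /path_cost sumr_ge0 // => i _; apply: Hnneg; apply: load_ge0. Qed.

Lemma social_cost_ge0 (f : P -> R) : (forall p, 0 <= f p) -> 0 <= social_cost pth ce f.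
Proof.
move=> f0; rewrite /social_cost sumr_ge0 // => e _.
by rewrite mulr_ge0 ?load_ge0 // Hnneg // load_ge0.
Qed.

Lemma wardrop_mu (M : R) (f : P -> R) : 0 < M -> wardrop pth ce M f ->
  exists mu, [/\ forall p, 0 < f p -> path_cost pth ce f p = mu,
     forall p, mu <= path_cost pth ce f p &
     social_cost pth ce f = M * mu].
Proof.
move=> M0 [[f0 fM] W].
have [p1 p1pos] : exists p1, 0 < f p1.
  apply/not_existsP => H.
  have : \sum_p f p = 0 by apply: big1 => p _; apply/eqP; rewrite eq_le f0 andbT leNgt; apply/negP => h; apply: (H p).
  by rewrite fM => M00; move: M0; rewrite M00 ltxx.
exists (path_cost pth ce f p1).
have eqmu p : 0 < f p -> path_cost pth ce f p = path_cost pth ce f p1.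
  by move=> fp; apply/eqP; rewrite eq_le !W.
split => //; first by move=> p; apply: W.
rewrite social_costE -fM mulr_suml; apply: eq_bigr => p _.
have [->|fp] := eqVneq (f p) 0; first by rewrite !mul0r.
by rewrite eqmu // lt_neqAle eq_sym fp f0.
Qed.

Lemma VI (M : R) (fs f : P -> R) : 0 < M -> wardrop pth ce M fs -> feasible M f ->
  0 <= \sum_e ce e (load pth fs e) * (load pth f e - load pth fs e).
Proof.
move=> M0 W [f0 fM].
have [mu [h1 h2 h3]] := wardrop_mu M0 W.
have e1 : \sum_e ce e (load pth fs e) * (load pth f e - load pth fs e) =
  \sum_e load pth f e * ce e (load pth fs e) - \sum_e load pth fs e * ce e (load pth fs e).
  by rewrite -sumrB; apply: eq_bigr => e _; ring.
rewrite e1. rewrite !sum_load. rewrite subr_ge0.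
have -> : \sum_p fs p * \sum_(e <- pth p) ce e (load pth fs e) = M * mu.
  by rewrite -h3 social_costE.
rewrite -fM mulr_suml; apply: ler_sum => p _.
by apply: ler_wpM2l => //; apply: h2.
Qed.


Lemma opt_le (M : R) (f : P -> R) : feasible M f -> opt pth ce M <= social_cost pth ce f.
Proof.
move=> hf; have lb : has_lbound [set social_cost pth ce f | f in feasible M].
  by exists 0 => y [g [g0 _] <-]; apply: social_cost_ge0.
by apply: (ge_inf lb); exists f.
Qed.

Lemma le_opt (M b : R) : (exists f : P -> R, feasible M f) ->
  (forall f : P -> R, feasible M f -> b <= social_cost pth ce f) -> b <= opt pth ce M.
Proof.
move=> [f hf] H; apply: lb_le_inf; first by exists (social_cost pth ce f); exists f.
by move=> y [g hg <-]; apply: H.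
Qed.

Lemma exists_heavy (f : P -> R) (M : R) (S : pred E) : feasible M f -> 0 < M ->
  (forall p, exists2 e, e \in pth p & S e) ->
  exists e, S e /\ M / (2 * #|E|%:R) < load pth f e.
Proof.
move=> [f0 fM] M0 HS.
apply/not_existsP => H.
have [p _] : exists p : P, true.
  apply/not_existsP => H'; have : \sum_p f p = 0 by rewrite big_pred0 // => p; apply/negP => _; apply: (H' p).
  by rewrite fM => M00; move: M0; rewrite M00 ltxx.
have [e1 _ _] := HS p.
have n0 : (0 < #|E|)%N by apply/card_gt0P; exists e1.
have n0' : 0 < 2 * #|E|%:R :> R by rewrite mulr_gt0 // ltr0n.
pose w e := (S e)%:R : R.
have h1 : \sum_e load pth f e * w e <= \sum_(e : E) M / (2 * #|E|%:R).
  apply: ler_sum => e _; rewrite /w; case: (boolP (S e)) => Se; last by rewrite mulr0 divr_ge0 // ltW.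
  rewrite mulr1 leNgt; apply/negP => h; apply: (H e); split => //.
have h2 : \sum_(e : E) M / (2 * #|E|%:R) = M / 2.
  rewrite sumr_const -mulr_natr; field.
  by rewrite pnatr_eq0 -lt0n.
have h3 : M <= \sum_e load pth f e * w e.
  rewrite sum_load -fM; apply: ler_sum => q _.
  rewrite -[X in X <= _]mulr1; apply: ler_wpM2l => //.
  have [e eq Se] := HS q.
  rewrite big_uniq // (bigD1 e) //= /w Se lerDl.
  by apply: sumr_ge0 => i _; case: (S i).
move: h1; rewrite h2 => h1.
have : M <= M / 2 by apply: le_trans h1.
lra.
Qed.

End Net.


Section RV.
Variable R : realType.

Lemma ratio_prod (c g : R -> R) (a b s : R) : (forall t, 0 < t -> 0 < c t) -> 0 < s ->
  limto (fun x => g x / c x) a -> limto (fun M => c (M * s) / c M) b ->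
  limto (fun M => g (M * s) / c M) (a * b).
Proof.
move=> cpos s0 Hg Hc.
have h := limto_mul (limto_scale s0 Hg) Hc.
apply: limto_eq h; exists 0 => M M0.
have cMs : 0 < c (M * s) by apply: cpos; rewrite mulr_gt0.
by rewrite mulrA divfK // gt_eqF.
Qed.

Lemma regvar_phi (c g0 : R -> R) (a0 : R) :
  regularly_varying_at_infty c ->
  (forall x y, 0 <= x -> x <= y -> g0 x <= g0 y) ->
  0 < a0 -> limto (fun x => g0 x / c x) a0 ->
  exists rho, 0 <= rho /\ forall s, 0 < s -> limto (fun M => c (M * s) / c M) (phi rho s).
Proof.
move=> [cpos Hl] g0mon a0p Hg0.
pose Q s l := l != 0 /\ limto (fun t => c (t * s) / c t) l.
pose lv s := xget 0 (Q s).
have Hlv s : 0 < s -> Q s (lv s).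
  move=> s0; apply: xgetPex; have [l l0 hl] := Hl s s0.
  by exists l; split => //; apply: limto_cvg.
have lvpos s : 0 < s -> 0 < lv s.
  move=> s0; have [l0 hl] := Hlv s s0.
  rewrite lt_neqAle eq_sym l0 /=.
  apply: (limto_le (limto_const 0) hl); exists 0 => M M0.
  by rewrite divr_ge0 // ltW // cpos // mulr_gt0.
have glim s : 0 < s -> limto (fun M => g0 (M * s) / c M) (a0 * lv s).
  by move=> s0; apply: ratio_prod => //; case: (Hlv s s0).
have lvmon s s' : 0 < s -> s <= s' -> lv s <= lv s'.
  move=> s0 ss'.
  have s'0 : 0 < s' by apply: lt_le_trans ss'.
  have := limto_le (glim s s0) (glim s' s'0).
  rewrite ler_pM2l // => H; apply: H; exists 0 => M M0.
  rewrite ler_pM2r ?invr_gt0 ?cpos //; apply: g0mon.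
    by rewrite mulr_ge0 // ltW.
  by rewrite ler_pM2l.
have lvmul s s' : 0 < s -> 0 < s' -> lv (s * s') = lv s * lv s'.
  move=> s0 s'0.
  have h1 := (Hlv _ (mulr_gt0 s0 s'0)).2.
  have h2 := ratio_prod cpos s0 (Hlv _ s'0).2 (Hlv _ s0).2.
  rewrite [RHS]mulrC; apply: (limto_unique h1); apply: limto_eq h2.
  by exists 0 => M _; rewrite mulrA.
pose L u := ln (lv (expR u)).
have Ladd u v : L (u + v) = L u + L v.
  by rewrite /L expRD lvmul ?expR_gt0 // lnM // posrE lvpos // expR_gt0.
have Lmon u v : u <= v -> L u <= L v.
  move=> uv; rewrite /L ler_ln ?posrE ?lvpos ?expR_gt0 //.
  by apply: lvmon; rewrite ?expR_gt0 ?ler_expR.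
have Llin := add_mono_lin Ladd Lmon.
exists (L 1); split.
  have := Lmon 0 1 ler01; rewrite (Llin 0) mul0r //.
move=> s s0.
have -> : phi (L 1) s = lv s.
  have es : expR (ln s) = s by rewrite lnK // posrE.
  by rewrite /phi mulrC -Llin /L es lnK // posrE lvpos.
exact: (Hlv s s0).2.
Qed.

Lemma ratio_inf (c g : R -> R) (b s : R) : (forall t, 0 < t -> 0 < c t) -> 0 < s -> 0 < b ->
  (forall A, ev (fun x => A < g x / c x)) -> limto (fun M => c (M * s) / c M) b ->
  forall K, ev (fun M => K < g (M * s) / c M).
Proof.
move=> cpos s0 b0 Hg Hc K.
set A := 2 * (`|K| + 1) / b.
have h1 := ev_scale s0 (Hg A).
have b2 : b / 2 < b by rewrite ltr_pdivrMr // ltr_pMr //; lra.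
have h2 := limto_lt Hc b2.
apply: evS (evI (evI h1 h2) (ev_gt 0)) => M [[k1 k2] M0].
have cMs : 0 < c (M * s) by apply: cpos; rewrite mulr_gt0.
have e : g (M * s) / c M = (g (M * s) / c (M * s)) * (c (M * s) / c M).
  by rewrite mulrA divfK // gt_eqF.
rewrite e.
move: k1 k2; set X := g (M * s) / c (M * s); set Y := c (M * s) / c M => k1 k2.
have K0 : 0 <= `|K| := normr_ge0 K.
have eA : A * (b / 2) = `|K| + 1 by rewrite /A; field; rewrite gt_eqF.
have Kle : K <= `|K| := ler_norm K.
have A0 : 0 <= A by rewrite /A divr_ge0 ?mulr_ge0 // ?ltW //; lra.
have b20 : 0 <= b / 2 by rewrite divr_ge0 // ltW.
have XY : A * (b / 2) < X * Y by apply: ltr_pM.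
rewrite eA in XY; lra.
Qed.
End RV.


Section Core.
Variables (R : realType) (E P : finType) (pth : P -> seq E) (ce : E -> R -> R).
Hypothesis Huniq : forall p, uniq (pth p).
Hypothesis Hnneg : forall e (x : R), 0 <= x -> 0 <= ce e x.
Hypothesis Hmono : forall e (x y : R), 0 <= x -> x <= y -> ce e x <= ce e y.

Lemma load_pos_path (f : P -> R) e : (forall p, 0 <= f p) -> 0 < load pth f e ->
  exists p, e \in pth p /\ 0 < f p.
Proof.
move=> f0 h; apply/not_existsP => H.
have : load pth f e <= 0.
  rewrite /load; apply: sumr_le0 => p ep; rewrite leNgt; apply/negP => fp.
  by apply: (H p).
by rewrite leNgt h.
Qed.

Lemma core_eq_ub (M cM : R) (fs : P -> R) (pstar : P) (lam : E -> R) :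
  0 < M -> wardrop pth ce M fs ->
  (forall e, e \in pth pstar -> ce e M <= lam e * cM) ->
  social_cost pth ce fs <= M * ((\sum_(e <- pth pstar) lam e) * cM) /\
  forall e, 0 < load pth fs e -> ce e (load pth fs e) <= (\sum_(e <- pth pstar) lam e) * cM.
Proof.
move=> M0 W Hl.
have [mu [h1 h2 h3]] := wardrop_mu Huniq M0 W.
have [[f0 fM] _] := W.
have mub : mu <= (\sum_(e <- pth pstar) lam e) * cM.
  apply: (le_trans (h2 pstar)); rewrite /path_cost mulr_suml big_seq_cond [leRHS]big_seq_cond.
  apply: ler_sum => e /andP[ep _]; apply: le_trans (Hl e ep); apply: Hmono.
    exact: load_ge0.
  by rewrite -fM; apply: load_le.
split; first by rewrite h3 ler_wpM2l // ltW.
move=> e he; have [p [ep fp]] := load_pos_path f0 he.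
apply: le_trans mub; rewrite -(h1 p fp).
exact: path_cost_ge.
Qed.

Lemma core_opt_lb (M cM k0 : R) (S : pred E) (f : P -> R) : 0 < M ->
  (forall p, exists2 e, e \in pth p & S e) ->
  (forall e, S e -> k0 * cM < ce e (M / (2 * #|E|%:R))) ->
  feasible M f -> M / (2 * #|E|%:R) * (k0 * cM) <= social_cost pth ce f.
Proof.
move=> M0 HS Hk hf.
have [e [Se he]] := exists_heavy Huniq hf M0 HS.
have [f0 _] := hf.
have n0 : 0 <= M / (2 * #|E|%:R) by rewrite divr_ge0 ?mulr_ge0 // ltW.
rewrite /social_cost (bigD1 e) //=.
have r0 : 0 <= \sum_(i | i != e) load pth f i * ce i (load pth f i).
  by apply: sumr_ge0 => i _; rewrite mulr_ge0 ?load_ge0 // Hnneg // load_ge0.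
have h1 : M / (2 * #|E|%:R) * (k0 * cM) <= M / (2 * #|E|%:R) * ce e (M / (2 * #|E|%:R)).
  by rewrite ler_wpM2l // ltW // Hk.
have h2 : M / (2 * #|E|%:R) * ce e (M / (2 * #|E|%:R)) <= load pth f e * ce e (load pth f e).
  apply: ler_pM => //; first by apply: Hnneg.
    exact: ltW.
  by apply: Hmono => //; exact: ltW.
lra.
Qed.

Lemma inf_edge_H (x xs cx cxs k L2 del M cM epp : R) : 0 <= x <= del * M ->
  0 <= xs <= del * M -> 0 <= cx -> 0 <= cxs <= L2 * cM -> 0 <= k ->
  (1 + k) * L2 * del * (M * cM) <= epp * (M * cM) ->
  - (epp * (M * cM)) <= x * cx - xs * cxs - k * cxs * (x - xs).
Proof.
move=> /andP[x0 x1] /andP[xs0 xs1] cx0 /andP[c0 c1] k0 He.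
have h1 : 0 <= x * cx by rewrite mulr_ge0.
have h2 : xs * cxs <= del * M * (L2 * cM) by apply: ler_pM.
have h3 : k * cxs * x <= k * (L2 * cM) * (del * M).
  by apply: ler_pM => //; rewrite ?mulr_ge0 // ler_wpM2l.
have h4 : 0 <= k * cxs * xs by rewrite !mulr_ge0.
have e : (1 + k) * L2 * del * (M * cM) = del * M * (L2 * cM) + k * (L2 * cM) * (del * M) by ring.
have e2 : x * cx - xs * cxs - k * cxs * (x - xs) = x * cx - xs * cxs - k * cxs * x + k * cxs * xs by ring.
rewrite e2; lra.
Qed.

Lemma social_ge_term (f : P -> R) e : (forall p, 0 <= f p) ->
  load pth f e * ce e (load pth f e) <= social_cost pth ce f.
Proof.
move=> f0; rewrite /social_cost (bigD1 e) //= lerDl.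
by apply: sumr_ge0 => i _; rewrite mulr_ge0 ?load_ge0 // Hnneg // load_ge0.
Qed.

Lemma core_cmp (M cM k Lam D gam del epp : R) (fin : pred E) (fs : P -> R) :
  0 < M -> 0 < cM -> 0 <= k -> 0 < del -> 0 < gam -> gam <= cM -> 0 <= Lam -> 0 <= D ->
  wardrop pth ce M fs ->
  social_cost pth ce fs <= M * (Lam * cM) ->
  (forall e, 0 < load pth fs e -> ce e (load pth fs e) <= Lam * cM) ->
  (forall e, ce e 0 <= D) ->
  (1 + k) * (Lam + D / gam) * del <= epp ->
  (forall e, ~~ fin e -> (Lam / del + Lam) * cM < ce e (del * M)) ->
  (forall e, fin e -> forall x y, 0 <= x <= M -> 0 <= y <= M ->
     - (epp * (M * cM)) <= x * ce e x - y * ce e y - k * ce e y * (x - y)) ->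
  forall f, feasible M f ->
    social_cost pth ce fs <= social_cost pth ce f + #|E|%:R * (epp * (M * cM)).
Proof.
move=> M0 cM0 k0 del0 gam0 gamc Lam0 D0 W HEq Hcap HD Hepp Hinf Hfin f hf.
have [[fs0 fsM] _] := W. have [f0 fM] := hf.
have Dg : 0 <= D / gam by rewrite divr_ge0 // ltW.
have L20 : 0 <= Lam + D / gam by rewrite addr_ge0.
have epp0 : 0 <= epp.
  apply: le_trans Hepp; apply: mulr_ge0; [apply: mulr_ge0 => //; lra | exact: ltW].
have MC0 : 0 < M * cM by rewrite mulr_gt0.
have nepp : 0 <= #|E|%:R * (epp * (M * cM)) by rewrite mulr_ge0 // mulr_ge0 // ltW.
have xs0 e : 0 <= load pth fs e by apply: load_ge0.
have xsM e : load pth fs e <= M by rewrite -fsM; apply: load_le.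
have x0 e : 0 <= load pth f e by apply: load_ge0.
have xM e : load pth f e <= M by rewrite -fM; apply: load_le.
have LcM : Lam * cM <= (Lam + D / gam) * cM by apply: ler_wpM2r; [exact: ltW | rewrite lerDl].
have cxs e : ce e (load pth fs e) <= (Lam + D / gam) * cM.
  case: (ltrP 0 (load pth fs e)) => h; first by apply: le_trans LcM; apply: Hcap.
  have -> : load pth fs e = 0 by apply/eqP; rewrite eq_le h xs0.
  apply: (le_trans (HD e)); rewrite mulrDl; apply: ler_wpDl; first by rewrite mulr_ge0 // ltW.
  apply: le_trans (_ : D / gam * gam <= _); first by rewrite divfK ?gt_eqF.
  by rewrite ler_wpM2l.
have LdL : Lam * cM <= (Lam / del + Lam) * cM.
  by apply: ler_wpM2r; [exact: ltW | rewrite lerDr divr_ge0 // ltW].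
have dM0 : 0 <= del * M by rewrite mulr_ge0 // ltW.
have xs_small e : ~~ fin e -> load pth fs e <= del * M.
  move=> ne; rewrite leNgt; apply/negP => h.
  have pos : 0 < load pth fs e by apply: le_lt_trans h.
  have h1 := Hcap e pos.
  have h2 : ce e (del * M) <= ce e (load pth fs e) by apply: Hmono => //; exact: ltW.
  have := lt_le_trans (Hinf e ne) (le_trans h2 (le_trans h1 LdL)).
  by rewrite ltxx.
case: (pselect (exists e, ~~ fin e /\ del * M < load pth f e)) => [[e [ne he]]|Hno].
  have h1 : M * (Lam * cM) <= del * M * ce e (del * M).
    have h : Lam / del * cM <= ce e (del * M).
      by apply: le_trans (ltW (Hinf e ne)); apply: ler_wpM2r; [exact: ltW | rewrite lerDl].
    have := ler_wpM2l dM0 h.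
    have -> : del * M * (Lam / del * cM) = M * (Lam * cM) by field; rewrite gt_eqF.
    done.
  have h2 : del * M * ce e (del * M) <= load pth f e * ce e (load pth f e).
    apply: ler_pM => //; first by apply: Hnneg.
      exact: ltW.
    by apply: Hmono => //; exact: ltW.
  have h3 := social_ge_term e f0.
  lra.
have Hno' e : ~~ fin e -> load pth f e <= del * M.
  move=> ne; rewrite leNgt; apply/negP => h; apply: Hno; by exists e.
have Hedge e : - (epp * (M * cM)) <= load pth f e * ce e (load pth f e)
    - load pth fs e * ce e (load pth fs e) - k * ce e (load pth fs e) * (load pth f e - load pth fs e).
  case: (boolP (fin e)) => fe.
    by apply: Hfin => //; rewrite ?x0 ?xM ?xs0 ?xsM.
  have a1 : 0 <= load pth f e <= del * M by rewrite x0 /= Hno'.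
  have a2 : 0 <= load pth fs e <= del * M by rewrite xs0 /= xs_small.
  have a3 : 0 <= ce e (load pth f e) by apply: Hnneg.
  have a4 : 0 <= ce e (load pth fs e) <= (Lam + D / gam) * cM by rewrite cxs Hnneg.
  have a5 : (1 + k) * (Lam + D / gam) * del * (M * cM) <= epp * (M * cM).
    by apply: ler_wpM2r => //; exact: ltW.
  exact: inf_edge_H a1 a2 a3 a4 k0 a5.
have hsum : \sum_(e : E) - (epp * (M * cM)) <= \sum_(e : E) (load pth f e * ce e (load pth f e)
    - load pth fs e * ce e (load pth fs e) - k * ce e (load pth fs e) * (load pth f e - load pth fs e)).
  by apply: ler_sum => e _; exact: Hedge.
have VIh := VI Huniq M0 W hf.
have kV := mulr_ge0 k0 VIh.
rewrite mulr_sumr in kV.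
move: hsum; rewrite !sumrB => hsum.
have ek : \sum_e k * ce e (load pth fs e) * (load pth f e - load pth fs e) =
  \sum_e k * (ce e (load pth fs e) * (load pth f e - load pth fs e)).
  by apply: eq_bigr => e _; rewrite mulrA.
rewrite ek in hsum.
rewrite /social_cost.
have : \sum_(i : E) - (epp * (M * cM)) = - (#|E|%:R * (epp * (M * cM))).
  by rewrite sumr_const mulr_natl mulNrn.
lra.
Qed.

Lemma poa_close (Eq op b eps : R) : 0 < b -> b <= op -> op <= Eq -> Eq <= op + eps * b ->
  0 <= eps -> `|(if op == 0 then 1 else Eq / op) - 1| <= eps.
Proof.
move=> b0 bo oE Eo e0.
have o0 : 0 < op by apply: lt_le_trans bo.
rewrite gt_eqF //.
have -> : Eq / op - 1 = (Eq - op) / op by field; rewrite gt_eqF.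
have nn : 0 <= (Eq - op) / op by rewrite divr_ge0 ?subr_ge0 // ltW.
rewrite ger0_norm // ler_pdivrMr //.
have : eps * b <= eps * op by rewrite ler_wpM2l.
lra.
Qed.

End Core.


Section Edge.
Variable R : realType.

Lemma scale_ineq (M cM k epp : R) (g : R -> R) : 0 < M -> 0 < cM ->
  (forall s t, 0 <= s <= 1 -> 0 <= t <= 1 ->
     - epp <= s * (g (M * s) / cM) - t * (g (M * t) / cM) - k * (g (M * t) / cM) * (s - t)) ->
  forall x y, 0 <= x <= M -> 0 <= y <= M ->
    - (epp * (M * cM)) <= x * g x - y * g y - k * g y * (x - y).
Proof.
move=> M0 cM0 H x y /andP[x0 xM] /andP[y0 yM].
have hs : 0 <= x / M <= 1.
  by apply/andP; split; [exact: divr_ge0 x0 (ltW M0) | rewrite ler_pdivrMr // mul1r].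
have ht : 0 <= y / M <= 1.
  by apply/andP; split; [exact: divr_ge0 y0 (ltW M0) | rewrite ler_pdivrMr // mul1r].
have := H _ _ hs ht.
have ex : M * (x / M) = x by rewrite mulrC divfK // gt_eqF.
have ey : M * (y / M) = y by rewrite mulrC divfK // gt_eqF.
rewrite ex ey.
have MC : 0 < M * cM by rewrite mulr_gt0.
rewrite -(ler_pM2r MC) mulNr.
have -> : (x / M * (g x / cM) - y / M * (g y / cM) - k * (g y / cM) * (x / M - y / M)) * (M * cM)
  = x * g x - y * g y - k * g y * (x - y).
  by field; rewrite !gt_eqF.
done.
Qed.

Lemma fin_edge_K (c g : R -> R) (rho r epp : R) : 0 <= rho -> 0 <= r -> 0 < epp ->
  (forall t, 0 < t -> 0 < c t) ->
  (forall x y, 0 <= x -> x <= y -> g x <= g y) ->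
  (forall x, 0 <= x -> 0 <= g x) ->
  (forall s, 0 < s -> limto (fun M => g (M * s) / c M) (r * phi rho s)) ->
  ev (fun M => forall x y, 0 <= x <= M -> 0 <= y <= M ->
     - (epp * (M * c M)) <= x * g x - y * g y - (rho + 1) * g y * (x - y)).
Proof.
move=> rho0 r0 epp0 cpos gmon gpos Hlim.
have [pts [e' [e'0 [Hpts HK]]]] := lemmaK rho0 r0 epp0.
have h : ev (fun M => forall s, s \in pts -> `|g (M * s) / c M - r * phi rho s| < e').
  apply: ev_seq => s sp; have [s0 _] := andP (Hpts s sp).
  exact: Hlim s s0 e' e'0.
have hh := evI h (ev_gt 0).
case: hh => M1 HM1; exists M1 => M /HM1 [HM M0].
have cM0 := cpos M M0.
apply: scale_ineq => // s t hs ht.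
apply: (HK (fun s => g (M * s) / c M)) => //.
- move=> a b a0 ab b1; rewrite ler_pM2r ?invr_gt0 //; apply: gmon.
    by rewrite mulr_ge0 // ltW.
  by rewrite ler_wpM2l // ltW.
- by move=> a a0 a1; rewrite divr_ge0 ?gpos ?mulr_ge0 // ltW.
- by move=> a ap; apply: ltW; apply: HM.
Qed.

Lemma limto_ge0 (f : R -> R) l : limto f l -> ev (fun x => 0 <= f x) -> 0 <= l.
Proof. by move=> Hf H; apply: (limto_le (limto_const 0) Hf). Qed.

End Edge.

Unset Implicit Arguments. Set Strict Implicit.

Lemma ereal_cases {R : realType} {x : \bar R} : x != -oo%E -> (x < +oo)%E -> x = (fine x)%:E.
Proof. by case: x. Qed.

Lemma gam_aux {R : realType} {g1 gM cM a : R} : 0 < a -> 0 < cM -> g1 <= gM ->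
  gM / cM < 2 * a -> g1 / (2 * a) <= cM.
Proof.
move=> a0 c0 h1 h2; rewrite ler_pdivrMr ?mulr_gt0 //.
rewrite ltr_pdivrMr // in h2; apply: le_trans h1 _; rewrite mulrC; exact: ltW.
Qed.

Lemma del_aux {R : realType} {X epp : R} : 0 <= X -> 0 < epp -> X * (epp / (X + 1)) <= epp.
Proof.
move=> X0 e0; rewrite mulrA ler_pdivrMr; last by lra.
by rewrite mulrC ler_wpM2l ?ltW //; lra.
Qed.

Lemma k0_aux {R : realType} {a1 r lv : R} : 0 < a1 -> 0 < lv -> a1 <= r -> a1 * lv / 2 < r * lv.
Proof.
move=> a0 l0 ar; have : a1 * lv <= r * lv by rewrite ler_pM2r.
have : 0 < a1 * lv by rewrite mulr_gt0.
lra.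
Qed.

Lemma pos_aux {R : realType} {x c : R} : 0 < c -> 0 < x / c -> 0 < x.
Proof. by move=> c0 h; have := mulr_gt0 h c0; rewrite divfK ?gt_eqF. Qed.

Theorem theorem4p6 (R : realType) (V E P : finType) (src tgt : E -> V) (o d : V)
  (pth : P -> seq E)
  (Hpaths : forall p, is_od_path src tgt o d (pth p))
  (Hinj : injective pth) (HPne : (0 < #|P|)%N)
  (ce : E -> R -> R)
  (Hcont : forall e, {within `[0, +oo[, continuous ce e})
  (Hmono : forall e (x y : R), 0 <= x -> x <= y -> ce e x <= ce e y)
  (Hnneg : forall e (x : R), 0 <= x -> 0 <= ce e x)
  (c : R -> R) (Hc : regularly_varying_at_infty c)
  (alpha : E -> \bar R)
  (Hbench : forall e, (ce e x / c x)%:E @[x --> +oo] --> alpha e)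
  (Htight : tight pth alpha)
  (feq : R -> P -> R) (Heq : forall M : R, 0 < M -> wardrop pth ce M (feq M)) :
  poa pth ce M (feq M) @[M --> +oo] --> (1 : R).
Proof.
have Huniq : forall p, uniq (pth p).
  by move=> p; have [_ _] := Hpaths p; rewrite /= => /andP[_ /map_uniq].
have [cpos Hl] := Hc.
have ratio0 e : ev (fun x => 0 <= ce e x / c x).
  by exists 0 => x x0; rewrite divr_ge0 ?Hnneg ?ltW ?cpos.
have aN e : alpha e != -oo%E.
  apply/eqP => ae; have := Hbench e; rewrite ae => /ev_eNy /(_ 0) h.
  have [x [h1 h2]] := ev_ex (evI h (ratio0 e)).
  by move: h2; rewrite leNgt h1.
pose fin := fun e => (alpha e < +oo)%E.
have fin_lim e : fin e -> limto (fun x => ce e x / c x) (fine (alpha e)).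
  by move=> fe; apply: limto_ereal; rewrite -ereal_cases //; exact: Hbench.
have fin_ge0 e : fin e -> 0 <= fine (alpha e).
  by move=> fe; apply: (limto_ge0 (fin_lim e fe) (ratio0 e)).
have inf_lim e : ~~ fin e -> forall A, ev (fun x => A < ce e x / c x).
  move=> ne; apply: ev_ey; have <- : alpha e = +oo%E.
    have : ~~ (alpha e < +oo)%E := ne; move: (aN e).
    by case: (alpha e) => [r _|//|//]; rewrite ltry.
  exact: Hbench.
move: Htight; rewrite /tight /alpha_net.
set an := (\big[mine/+oo]_p \big[maxe/-oo]_(e <- pth p) alpha e)%E.
move=> /andP[Hpos Hfin].
have [pstar Hpstar] : exists pstar, forall e, e \in pth pstar -> fin e.
  case: (boolP [exists p, [forall e, (e \in pth p) ==> fin e]]).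
    move=> /existsP[p /forallP H]; exists p => e ep.
    by have := H e; rewrite ep.
  rewrite negb_exists => /forallP H.
  have : (+oo <= an)%E.
    apply: le_bigmin => // p _.
    have := H p; rewrite negb_forall => /existsP[e]; rewrite negb_imply => /andP[ep nf].
    apply: le_trans (le_bigmax_seq _ _ predT _ ep _) => //.
    by rewrite leNgt.
  by rewrite leNgt Hfin.
have Hnet p : exists2 e, e \in pth p & (an <= alpha e)%E.
  case: (boolP [exists e, (e \in pth p) && (an <= alpha e)%E]).
    by move=> /existsP[e /andP[ep he]]; exists e.
  rewrite negb_exists => /forallP H.
  have h1 : (\big[maxe/-oo]_(e <- pth p) alpha e < an)%E.
    rewrite big_seq_cond; apply: bigmax_lt.
      by apply: lt_trans Hpos; rewrite ltNye.
    move=> e /andP[ep _]; have := H e; rewrite ep /= -ltNge //.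
  have h2 : (an <= \big[maxe/-oo]_(e <- pth p) alpha e)%E by apply: bigmin_le.
  by have := lt_le_trans h1 h2; rewrite ltxx.
have anN : an != -oo%E by rewrite gt_eqF // (lt_trans _ Hpos) // ltNye.
set a1 := fine an.
have anE : an = a1%:E := ereal_cases anN Hfin.
have a1pos : 0 < a1 by rewrite -lte_fin -anE.
have [e0 e0p e0an] := Hnet pstar.
have fe0 := Hpstar e0 e0p.
set a0 := fine (alpha e0).
have a0E : alpha e0 = a0%:E := ereal_cases (aN e0) fe0.
have a10 : a1 <= a0 by rewrite -lee_fin -anE -a0E.
have a0pos : 0 < a0 by apply: lt_le_trans a10.
have [rho [rho0 Hphi]] := regvar_phi Hc (Hmono e0) a0pos (fin_lim e0 fe0).
apply: cvg_limto => eps eps0.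
pose n := #|E|%:R : R.
have n0 : 0 < n by rewrite ltr0n; apply/card_gt0P; exists e0.
pose s0 := (2 * n)^-1.
have s00 : 0 < s0 by rewrite invr_gt0 mulr_gt0.
pose lv0 := phi rho s0.
have lv00 : 0 < lv0 := phi_gt0 _ _.
pose k0 := a1 * lv0 / 2.
have k00 : 0 < k0 by rewrite divr_gt0 // mulr_gt0.
pose lam := fun e => fine (alpha e) + 1.
pose Lam := \sum_(e <- pth pstar) lam e.
have Lam0 : 0 <= Lam.
  rewrite /Lam big_seq; apply: sumr_ge0 => e ep; rewrite /lam.
  by rewrite addr_ge0 // fin_ge0 // Hpstar.
pose D := \sum_e ce e 0.
have HD e : ce e 0 <= D.
  rewrite /D (bigD1 e) //= lerDl; apply: sumr_ge0 => i _; exact: Hnneg.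
have D0 : 0 <= D by apply: le_trans (HD e0); apply: Hnneg.
have [gam [gam0 EVg]] : exists gam, 0 < gam /\ ev (fun M => gam <= c M).
  have ha : a0 / 2 < a0 by rewrite ltr_pdivrMr // ltr_pMr //; lra.
  have hb : a0 < 2 * a0 by rewrite ltr_pMl //; lra.
  have h1 := limto_lt (fin_lim e0 fe0) ha.
  have h2 := limto_gt (fin_lim e0 fe0) hb.
  have [x1 [hx1 x10]] := ev_ex (evI h1 (ev_gt 0)).
  have c1 := cpos x1 x10.
  have g1 : 0 < ce e0 x1.
    by apply: (pos_aux c1); apply: lt_trans hx1; rewrite divr_gt0.
  exists (ce e0 x1 / (2 * a0)); split; first by rewrite divr_gt0 // mulr_gt0.
  have hh := evI (evI h2 (ev_gt x1)) (ev_gt 0).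
  case: hh => M1 HM1; exists M1 => M /HM1 [[hM xM] M0].
  apply: (gam_aux (gM := ce e0 M) a0pos (cpos M M0) _ hM).
  by apply: Hmono; [exact: ltW | exact: ltW].
pose epp := eps / 2 * s0 * k0 / n.
have epp0 : 0 < epp.
  rewrite /epp; apply: divr_gt0 => //; apply: mulr_gt0 => //; apply: mulr_gt0 => //.
  exact: divr_gt0.
pose Lg := Lam + D / gam.
have Lg0 : 0 <= Lg by rewrite addr_ge0 // divr_ge0 // ltW.
pose del := epp / ((1 + (rho + 1)) * Lg + 1).
have X0 : 0 <= (1 + (rho + 1)) * Lg by rewrite mulr_ge0 //; lra.
have del0 : 0 < del by rewrite divr_gt0 //; lra.
have Hdel : (1 + (rho + 1)) * (Lam + D / gam) * del <= epp by exact: del_aux.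
have EVfin : ev (fun M => forall e, fin e -> forall x y, 0 <= x <= M -> 0 <= y <= M ->
   - (epp * (M * c M)) <= x * ce e x - y * ce e y - (rho + 1) * ce e y * (x - y)).
  apply: ev_fin => e; case: (boolP (fin e)) => fe; last by exists 0 => M _ /negP.
  have := fin_edge_K rho0 (fin_ge0 e fe) epp0 cpos (Hmono e) (Hnneg e)
    (fun s s0 => ratio_prod cpos s0 (fin_lim e fe) (Hphi s s0)).
  by case => M1 HM1; exists M1 => M /HM1 H _.
have EVinf : ev (fun M => forall e, ~~ fin e -> (Lam / del + Lam) * c M < ce e (del * M)).
  apply: ev_fin => e; case: (boolP (fin e)) => fe; first by exists 0 => M _ /negP [].
  have h := ratio_inf cpos del0 (phi_gt0 rho del) (inf_lim e fe) (Hphi del del0) (Lam / del + Lam).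
  have hh := evI h (ev_gt 0); case: hh => M1 HM1; exists M1 => M /HM1 [hM M0] _.
  by rewrite [del * M]mulrC -ltr_pdivlMr ?cpos.
have EVS : ev (fun M => forall e, (an <= alpha e)%E -> k0 * c M < ce e (M / (2 * n))).
  apply: ev_fin => e; case: (boolP (an <= alpha e)%E) => Se; last first.
    by exists 0 => M _ h; move/negP: Se.
  have key : ev (fun M => k0 < ce e (M * s0) / c M).
    case: (boolP (fin e)) => fe.
      have h := ratio_prod cpos s00 (fin_lim e fe) (Hphi s0 s00).
      apply: (limto_lt h); apply: k0_aux => //.
      by rewrite -lee_fin -anE -(ereal_cases (aN e) fe).
    exact: ratio_inf cpos s00 lv00 (inf_lim e fe) (Hphi s0 s00) k0.
  have hh := evI key (ev_gt 0); case: hh => M1 HM1; exists M1 => M /HM1 [hM M0] _.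
  by rewrite -ltr_pdivlMr ?cpos.
have EVp : ev (fun M => forall e, e \in pth pstar -> ce e M <= lam e * c M).
  apply: ev_fin => e; case: (boolP (e \in pth pstar)) => ep; last first.
    by exists 0 => M _ h; move/negP: ep.
  have fe := Hpstar e ep.
  have hl : fine (alpha e) < lam e by rewrite /lam ltrDl.
  have h := limto_gt (fin_lim e fe) hl.
  have hh := evI h (ev_gt 0); case: hh => M1 HM1; exists M1 => M /HM1 [hM M0] _.
  by rewrite -ler_pdivrMr ?cpos //; exact: ltW.
have ALL := evI (evI (evI (evI (evI EVfin EVinf) EVS) EVp) EVg) (ev_gt 0).
case: ALL => M1 HM1; exists M1 => M /HM1 [[[[[Hfin' Hinf'] HS'] Hp'] Hg'] M0].
have cM0 := cpos M M0.
have W := Heq M M0.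
have [HEq Hcap] := core_eq_ub Huniq Hnneg Hmono M0 W Hp'.
have hfs : feasible M (feq M) := W.1.
have HS2 : forall p, exists2 e, e \in pth p & (fun e => (an <= alpha e)%E) e by exact: Hnet.
have Hopt_lb : M / (2 * n) * (k0 * c M) <= opt pth ce M.
  apply: le_opt; first by exists (feq M).
  by move=> f hf; exact: (core_opt_lb Huniq Hnneg Hmono M0 HS2 HS' hf).
have Hopt_ub : opt pth ce M <= social_cost pth ce (feq M) := opt_le pth Hnneg hfs.
have k1 : 0 <= rho + 1 by rewrite addr_ge0.
have Hcmp : social_cost pth ce (feq M) - n * (epp * (M * c M)) <= opt pth ce M.
  apply: le_opt; first by exists (feq M).
  move=> f hf.
  have := core_cmp Huniq Hnneg Hmono (fin := fin) M0 cM0 k1 del0 gam0 Hg' Lam0 D0 W HEq Hcap HD Hdel Hinf' Hfin' hf.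
  by rewrite lerBlDr.
have b0 : 0 < M / (2 * n) * (k0 * c M) by rewrite !mulr_gt0 // invr_gt0 mulr_gt0.
have eps2 : 0 <= eps / 2 by rewrite divr_ge0 // ltW.
have eqb : n * (epp * (M * c M)) = eps / 2 * (M / (2 * n) * (k0 * c M)).
  by rewrite /epp /s0; field; rewrite gt_eqF.
rewrite eqb lerBlDr in Hcmp.
have := poa_close b0 Hopt_lb Hopt_ub Hcmp eps2.
rewrite /poa => h; apply: le_lt_trans h _.
by rewrite ltr_pdivrMr // ltr_pMr //; lra.
Qed.
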